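(* Let $\lambda\in P_+$ and let $x$ be a finite-dimensional nilpotent $\Lambda$-submodule of $q_\lambda$ (i.e. $x\in\Lambda^\lambda_\beta$ for some $\beta$, identified with a submodule of $q_\lambda$). Let $i,j\in I$ (not necessarily distinct) and let $y$ be a submodule of $q_\lambda$ containing $x$ with $y/x\cong s_j$. Then $$\varphi_i(y)-\varepsilon_i(y)=\varphi_i(x)-\varepsilon_i(x)-a_{ij}.$$
   Context: $\Gamma$ is a finite graph without loops with vertex set $I$; $a_{ii}=2$, and $-a_{ij}$ is the number of edges between $i\ne j$. $\Lambda$ is the preprojective algebra of $\Gamma$ over $\mathbb C$, $s_i$ the simple module at $i$, $q_i$ its injective hull. For a dominant integral weight $\lambda$ of the Kac–Moody algebra of $\Gamma$ (with simple roots $\alpha_i$ and symmetric form $(\alpha_i;\alpha_j)=a_{ij}$), $q_\lambda=\bigoplus_i q_i^{\oplus(\lambda;\alpha_i)}$. A finite-dimensional module is nilpotent if all its composition factors are among the $s_i$. For a submodule $x$ of $q_\lambda$: $\varepsilon_i(x)$ is the multiplicity of $s_i$ in the head (top) of $x$, and $\varphi_i(x)$ is the multiplicity of $s_i$ in the socle of $q_\lambda/x$. *)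

(* Defs.v *)
From HB Require Import structures.
From mathcomp Require Import all_boot all_order all_algebra.
From mathcomp Require Import reals complex.
From Stdlib Require Import ClassicalEpsilon.
Set Implicit Arguments.
Unset Strict Implicit.
Unset Printing Implicit Defensive.
Import GRing.Theory.
Local Open Scope ring_scope.

(* The graph Gamma: a finite vertex set I, a finite edge set E, each    *)
(* edge e joining src e and tgt e (an auxiliary orientation Omega,      *)
(* needed to write the preprojective relation), no loops.               *)

Section Preproj.
Variables (I E : finType) (src tgt : E -> I).

Definition cartan (i j : I) : int :=
  if i == j then 2%:Z
  else - (#|[set e : E | ((src e == i) && (tgt e == j))
                        || ((src e == j) && (tgt e == i))]|)%:Z.

(* Arrows of the double quiver: inl e : src e -> tgt e,
   inr e = e^* : tgt e -> src e. *)
Definition hs (h : E + E) : I := match h with inl e => src e | inr e => tgt e end.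
Definition ht (h : E + E) : I := match h with inl e => tgt e | inr e => src e end.

Variable C : fieldType.

(* A (possibly infinite-dimensional) module over the preprojective algebra
   Lambda = C Qbar / (sum_{a in Omega} (a a^* - a^* a)), presented by the
   action of its generators: the vertex idempotents e_i and the arrows. *)
Record pmod := PMod {
  carrier : lmodType C;
  idem : I -> carrier -> carrier;
  act : E + E -> carrier -> carrier;
  idem_lin : forall i, linear (idem i);
  act_lin : forall h, linear (act h);
  idem_orth : forall i j v, idem i (idem j v) = if i == j then idem i v else 0;
  idem_sum : forall v, \sum_(i : I) idem i v = v;
  act_idem : forall h v, act h v = idem (ht h) (act h (idem (hs h) v));
  preproj_rel : forall v,
    \sum_(e : E) (act (inl e) (act (inr e) v) - act (inr e) (act (inl e) v)) = 0
}.

Definition is_morph (M N : pmod) (f : carrier M -> carrier N) : Prop :=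
  linear f /\ (forall i v, f (idem i v) = idem i (f v))
  /\ (forall h v, f (act h v) = act h (f v)).

Definition vset (V : Type) := V -> Prop.

Definition set_sub (V : Type) (S T : vset V) := forall v, S v -> T v.
Definition set_eq (V : Type) (S T : vset V) := forall v, S v <-> T v.

Definition is_submod (M : pmod) (S : vset (carrier M)) : Prop :=
  S 0 /\ (forall u v, S u -> S v -> S (u + v))
  /\ (forall (a : C) v, S v -> S (a *: v))
  /\ (forall i v, S v -> S (idem i v))
  /\ (forall h v, S v -> S (act h v)).

(* codim V S T n :  dim (T / (S :&: T)) = n, i.e. there are n vectors of T,
   linearly independent modulo S, spanning T modulo S. *)
Definition codim (V : lmodType C) (S T : vset V) (n : nat) : Prop :=
  exists vs : n.-tuple V,
    (forall k, T (tnth vs k))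
    /\ (forall c : 'I_n -> C, S (\sum_k c k *: tnth vs k) -> forall k, c k = 0)
    /\ (forall t, T t -> exists c : 'I_n -> C, S (t - \sum_k c k *: tnth vs k)).

Definition zero_set (V : lmodType C) : vset V := fun v => v = 0.

(* The dimension (a natural number, chosen by classical choice among the
   witnesses of codim; it is unique whenever it exists). *)
Definition qdim (V : lmodType C) (S T : vset V) : nat :=
  epsilon (inhabits 0%N) (fun n => codim S T n).

Definition at_vertex (M : pmod) (i : I) (S : vset (carrier M)) : vset (carrier M) :=
  fun v => S v /\ idem i v = v.

(* T/S is isomorphic to the simple module s_j (S, T submodules, S <= T):
   T = S + C v with v at vertex j, v not in S, and every arrow sends v into S. *)
Definition quot_is_simple_s (M : pmod) (S T : vset (carrier M)) (j : I) : Prop :=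
  set_sub S T /\
  exists v, T v /\ ~ S v /\ idem j v = v /\ (forall h, S (act h v)) /\
    (forall t, T t -> exists a : C, S (t - a *: v)).

Definition fd_nilpotent (M : pmod) (S : vset (carrier M)) : Prop :=
  (exists n, codim (zero_set (V:=carrier M)) S n) /\
  exists (n : nat) (ch : nat -> vset (carrier M)),
    set_eq (ch 0%N) (zero_set (V:=carrier M)) /\ set_eq (ch n) S /\
    (forall k, (k <= n)%N -> is_submod (ch k)) /\
    (forall k, (k < n)%N -> exists i, quot_is_simple_s (ch k) (ch k.+1) i).

(* A module is locally nilpotent if each vector lies in a finite-dimensional
   nilpotent submodule. This is the category in which injective hulls are taken. *)
Definition loc_nilpotent (M : pmod) : Prop :=
  forall v : carrier M, exists S, is_submod S /\ fd_nilpotent S /\ S v.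

Definition injective_ln (Q : pmod) : Prop :=
  forall (A B : pmod) (g : carrier A -> carrier B) (u : carrier A -> carrier Q),
    loc_nilpotent A -> loc_nilpotent B ->
    is_morph g -> injective g -> is_morph u ->
    exists w : carrier B -> carrier Q, is_morph w /\ forall a, w (g a) = u a.

(* The semisimple module s_lambda = (+)_i s_i^(lam i), realised on
   functions {i : I & 'I_(lam i)} -> C, the coordinate (i,k) being a copy of s_i. *)
Section SLambda.
Variable lam : I -> nat.
Definition slam_index := {i : I & 'I_(lam i)}.
Definition slam_carrier : lmodType C := {ffun slam_index -> C^o}.
Definition slam_idem (i : I) (f : slam_carrier) : slam_carrier :=
  [ffun t => if tag t == i then f t else 0].
Definition slam_act (h : E + E) (f : slam_carrier) : slam_carrier := 0.

Lemma slam_idem_lin i : linear (slam_idem i).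
Proof.
move=> a u v; apply/ffunP => t; rewrite !ffunE.
by case: ifP => _; rewrite ?ffunE // scaler0 addr0.
Qed.

Lemma slam_act_lin h : linear (slam_act h).
Proof. by move=> a u v; rewrite /slam_act scaler0 addr0. Qed.

Lemma slam_idem_orth i j v :
  slam_idem i (slam_idem j v) = if i == j then slam_idem i v else 0.
Proof.
apply/ffunP => t; rewrite /slam_idem.
have E0 : forall t, (0 : slam_carrier) t = 0 by move=> t'; rewrite ffunE.
case: (eqVneq i j) => [->|nij]; rewrite ?E0 !ffunE.
  by case: (tag t == j).
case: ifP => [/eqP ti|//]; case: ifP => [/eqP tj|//].
by move: nij; rewrite -ti tj eqxx.
Qed.

Lemma slam_idem_sum v : \sum_(i : I) slam_idem i v = v.
Proof.
apply/ffunP => t; rewrite sum_ffunE (bigD1 (tag t)) //= ffunE eqxx big1 ?addr0 //.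
by move=> i ni; rewrite ffunE eq_sym (negbTE ni).
Qed.

Lemma slam_act_idem h v :
  slam_act h v = slam_idem (ht h) (slam_act h (slam_idem (hs h) v)).
Proof.
apply/ffunP => t; rewrite /slam_act /slam_idem !ffunE.
by case: ifP.
Qed.

Lemma slam_preproj v :
  \sum_(e : E) (slam_act (inl e) (slam_act (inr e) v)
                - slam_act (inr e) (slam_act (inl e) v)) = 0.
Proof. by rewrite big1 // => e _; rewrite /slam_act subrr. Qed.

Definition s_lambda : pmod :=
  @PMod slam_carrier slam_idem slam_act slam_idem_lin slam_act_lin
        slam_idem_orth slam_idem_sum slam_act_idem slam_preproj.
End SLambda.

(* Q is an injective hull of s_lambda in the category of locally nilpotent
   Lambda-modules: Q is locally nilpotent and injective there, and there is a
   monomorphism s_lambda -> Q whose image is essential. Any such Q is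
   isomorphic to q_lambda = (+)_i q_i^(lam i). *)
Definition is_q_lambda (lam : I -> nat) (Q : pmod) : Prop :=
  loc_nilpotent Q /\ injective_ln Q /\
  exists f : carrier (s_lambda lam) -> carrier Q,
    is_morph f /\ injective f /\
    forall S : vset (carrier Q), is_submod S -> (exists v, S v /\ v <> 0) ->
      exists w, S w /\ w <> 0 /\ exists u, w = f u.

Section Crystal.
Variable Q : pmod.

Definition maximal_sub (x m : vset (carrier Q)) : Prop :=
  is_submod m /\ set_sub m x /\ (exists v, x v /\ ~ m v) /\
  forall w, is_submod w -> set_sub m w -> set_sub w x -> set_eq w m \/ set_eq w x.

Definition radical (x : vset (carrier Q)) : vset (carrier Q) :=
  fun v => x v /\ forall m, maximal_sub x m -> m v.

(* eps_i(x) = multiplicity of s_i in the head x / rad x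
             = dim e_i (x / rad x). *)
Definition eps (i : I) (x : vset (carrier Q)) : nat :=
  qdim (at_vertex i (radical x)) (at_vertex i x).

Definition simple_over (x z : vset (carrier Q)) : Prop :=
  is_submod z /\ set_sub x z /\ (exists v, z v /\ ~ x v) /\
  forall w, is_submod w -> set_sub x w -> set_sub w z -> set_eq w x \/ set_eq w z.

(* Preimage in Q of the socle of Q/x: x + (sum of all z with z/x simple). *)
Definition socle_over (x : vset (carrier Q)) : vset (carrier Q) :=
  fun v => exists (x0 : carrier Q) (s : seq (carrier Q)),
    x x0 /\ (forall w, w \in s -> exists z, simple_over x z /\ z w)
    /\ v = x0 + \sum_(w <- s) w.

(* phi_i(x) = multiplicity of s_i in soc(Q/x) = dim e_i (soc(Q/x)). *)
Definition phi (i : I) (x : vset (carrier Q)) : nat :=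
  qdim (at_vertex i x) (at_vertex i (socle_over x)).
End Crystal.

End Preproj.

(* Main.v *)
Require Import Defs.
From HB Require Import structures.
From mathcomp Require Import all_boot all_order all_algebra.
From mathcomp Require Import reals complex.
From Stdlib Require Import ClassicalEpsilon Classical Lia.
From mathcomp Require Import zify.
Set Implicit Arguments.
Unset Strict Implicit.
Unset Printing Implicit Defensive.
Import GRing.Theory.
Local Open Scope ring_scope.

Lemma choiceT {A B : Type} (P : A -> B -> Prop) :
  (forall a, exists b, P a b) -> exists f : A -> B, forall a, P a (f a).
Proof.
move=> H; exists (fun a => proj1_sig (constructive_indefinite_description _ (H a))).
by move=> a; case: (constructive_indefinite_description _ (H a)).
Qed.

Section LA.
Variables (F : fieldType) (V : lmodType F).

Definition subsp (S : vset V) :=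
  S 0 /\ (forall u v, S u -> S v -> S (u + v)) /\ (forall a v, S v -> S (a *: v)).

Definition lc n (vs : n.-tuple V) (c : 'I_n -> F) := \sum_k c k *: tnth vs k.

Lemma subspN S v : subsp S -> S v -> S (- v).
Proof. by case=> _ [_ HZ] Sv; rewrite -scaleN1r; apply: HZ. Qed.

Lemma subspB S u v : subsp S -> S u -> S v -> S (u - v).
Proof. by move=> hS Su Sv; case: (hS) => _ [HD _]; apply: HD => //; apply: subspN. Qed.

Lemma subsp_sum S (J : finType) (f : J -> V) (P : pred J) :
  subsp S -> (forall j, P j -> S (f j)) -> S (\sum_(j | P j) f j).
Proof.
move=> [S0 [SD _]] H; apply: (big_ind S) => //.
Qed.

Lemma subsp_lc S n (vs : n.-tuple V) c :
  subsp S -> (forall k, S (tnth vs k)) -> S (lc vs c).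
Proof. move=> hS H; apply: subsp_sum => // k _; by case: hS => _ [_ HZ]; apply: HZ. Qed.

Lemma lcD n (vs : n.-tuple V) c1 c2 :
  lc vs (fun k => c1 k + c2 k) = lc vs c1 + lc vs c2.
Proof. by rewrite /lc -big_split; apply: eq_bigr => k _; rewrite scalerDl. Qed.

Lemma lcZ n (vs : n.-tuple V) a c :
  lc vs (fun k => a * c k) = a *: lc vs c.
Proof. by rewrite /lc scaler_sumr; apply: eq_bigr => k _; rewrite scalerA. Qed.

Lemma lc0 n (vs : n.-tuple V) : lc vs (fun _ => 0) = 0.
Proof. by rewrite /lc big1 // => k _; rewrite scale0r. Qed.

Lemma lcN n (vs : n.-tuple V) c : lc vs (fun k => - c k) = - lc vs c.
Proof. by rewrite /lc -sumrN; apply: eq_bigr => k _; rewrite scaleNr. Qed.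

Lemma lc_cat a b (vs : a.-tuple V) (ws : b.-tuple V) c :
  lc [tuple of vs ++ ws] c = lc vs (fun k => c (lshift b k)) + lc ws (fun k => c (rshift a k)).
Proof.
rewrite /lc big_split_ord /=; congr (_ + _); apply: eq_bigr => k _.
  by rewrite tnth_lshift. by rewrite tnth_rshift.
Qed.

Definition catc a b (c1 : 'I_a -> F) (c2 : 'I_b -> F) : 'I_(a + b) -> F :=
  fun k => match split k with inl k1 => c1 k1 | inr k2 => c2 k2 end.

Lemma catc_l a b c1 c2 k : @catc a b c1 c2 (lshift b k) = c1 k.
Proof. by rewrite /catc (unsplitK (inl k)). Qed.
Lemma catc_r a b c1 c2 k : @catc a b c1 c2 (rshift a k) = c2 k.
Proof. by rewrite /catc (unsplitK (inr k)). Qed.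

Lemma lc_catc a b (vs : a.-tuple V) (ws : b.-tuple V) c1 c2 :
  lc [tuple of vs ++ ws] (catc c1 c2) = lc vs c1 + lc ws c2.
Proof.
rewrite lc_cat; congr (_ + _); apply: eq_bigr => k _; by rewrite ?catc_l ?catc_r.
Qed.

Lemma cat_zero a b (c : 'I_(a + b) -> F) :
  (forall k, c (lshift b k) = 0) -> (forall k, c (rshift a k) = 0) -> forall k, c k = 0.
Proof.
move=> H1 H2 k; have := splitK k; case: (split k) => [k1|k2] /= <-; by [apply: H1|apply: H2].
Qed.

Lemma codim_eq (S S' T T' : vset V) n :
  set_eq S S' -> set_eq T T' -> @codim F V S T n -> @codim F V S' T' n.
Proof.
move=> eS eT [vs [H1 [H2 H3]]]; exists vs; split; [|split].
- by move=> k; apply/eT.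
- by move=> c /eS; apply: H2.
- by move=> t /eT /H3 [c Hc]; exists c; apply/eS.
Qed.

Lemma dim_bound S n (vs : n.-tuple V) m (ws : m.-tuple V) :
  subsp S ->
  (forall k, exists c, S (tnth ws k - lc vs c)) ->
  (forall c, S (lc ws c) -> forall k, c k = 0) -> (m <= n)%N.
Proof.
move=> hS Hsp Hind.
have [cc Hcc] := choiceT Hsp.
pose M : 'M[F]_(m, n) := \matrix_(k, l) cc k l.
have fr : row_free M.
  apply: inj_row_free => a Ha; apply/rowP => k; rewrite mxE.
  apply: (Hind (fun k => a 0 k)).
  have S1 : S (\sum_k a 0 k *: (tnth ws k - lc vs (cc k))).
    by apply: subsp_sum => // k' _; case: hS => _ [_ HZ]; apply: HZ.
  have Z : \sum_k a 0 k *: lc vs (cc k) = 0.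
    rewrite /lc; under eq_bigr do rewrite scaler_sumr.
    rewrite exchange_big /= big1 // => l _.
    rewrite (eq_bigr (fun i => (a 0 i * cc i l) *: tnth vs l)); last by move=> i _; rewrite scalerA.
    rewrite -scaler_suml.
    have : (a *m M) 0 l = 0 by rewrite Ha mxE.
    rewrite !mxE => H0.
    suff -> : \sum_i a 0 i * cc i l = 0 by rewrite scale0r.
    rewrite -[RHS]H0; apply: eq_bigr => j _; by rewrite ?mxE.
  move: S1; under eq_bigr do rewrite scalerBr.
  by rewrite sumrB Z subr0.
by have := rank_leq_col M; rewrite (eqP fr).
Qed.


Lemma codim_uniq (S T : vset V) n m :
  subsp S -> @codim F V S T n -> @codim F V S T m -> n = m.
Proof.
move=> hS [vs [Hv1 [Hv2 Hv3]]] [ws [Hw1 [Hw2 Hw3]]].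
apply/eqP; rewrite eqn_leq; apply/andP; split.
- apply: (@dim_bound S m ws n vs) => // k; exact: Hw3.
- apply: (@dim_bound S n vs m ws) => // k; exact: Hv3.
Qed.

Lemma qdimE (S T : vset V) n :
  subsp S -> @codim F V S T n -> @qdim F V S T = n.
Proof.
move=> hS H; rewrite /qdim.
have Hk := epsilon_spec (inhabits 0%N) (fun n => @codim F V S T n) (ex_intro _ n H).
exact: codim_uniq hS Hk H.
Qed.


Lemma tnth_catP a b (P : V -> Prop) (vs : a.-tuple V) (ws : b.-tuple V) :
  (forall k, P (tnth vs k)) -> (forall k, P (tnth ws k)) ->
  forall k, P (tnth [tuple of vs ++ ws] k).
Proof.
move=> H1 H2 k; have := splitK k; case: (split k) => [k1|k2] /= <-.
  by rewrite tnth_lshift. by rewrite tnth_rshift.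
Qed.

Lemma lc1 (t : V) c : lc [tuple t] c = c ord0 *: t.
Proof. by rewrite /lc big_ord1. Qed.

Lemma indep_ext (S : vset V) m (ws : m.-tuple V) t :
  subsp S -> (forall c, S (lc ws c) -> forall k, c k = 0) ->
  (forall c, ~ S (t - lc ws c)) ->
  forall c, S (lc [tuple of ws ++ [tuple t]] c) -> forall k, c k = 0.
Proof.
move=> hS Hind Hnot c; rewrite lc_cat lc1 => HS.
set a := c (rshift m ord0) in HS.
have a0 : a = 0.
  apply/eqP; apply: contraT => an0; exfalso.
  apply: (Hnot (fun k => - (a^-1 * c (lshift 1 k)))).
  rewrite lcN lcZ opprK.
  have -> : t + a^-1 *: lc ws (fun k => c (lshift 1 k)) =
     a^-1 *: (lc ws (fun k => c (lshift 1 k)) + a *: t).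
    by rewrite scalerDr scalerA mulVf // scale1r addrC.
  by case: hS => _ [_ HZ]; apply: HZ.
move: HS; rewrite a0 scale0r addr0 => /Hind H1.
apply: cat_zero => // k; by rewrite (ord1 k).
Qed.

Lemma codim_exists (S T : vset V) n (vs : n.-tuple V) :
  subsp S -> (forall t, T t -> exists c, S (t - lc vs c)) ->
  exists m, @codim F V S T m.
Proof.
move=> hS Hsp; apply: NNPP => Hno.
have ind : forall k, exists m, (k <= m)%N /\ exists ws : m.-tuple V,
   (forall k, T (tnth ws k)) /\ (forall c, S (lc ws c) -> forall k, c k = 0).
  elim => [|k [m [km [ws [H1 H2]]]]].
    exists 0%N; split => //; exists [tuple]; split; first by case.
    by move=> c _ [].
  have : ~ (forall t, T t -> exists c, S (t - lc ws c)).
    by move=> Hs; apply: Hno; exists m, ws.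
  move=> Hn; have [t Ht] := not_all_ex_not _ _ Hn.
  have [Tt Hnc] := imply_to_and _ _ Ht.
  exists (m + 1)%N; split; first by rewrite addn1.
  exists [tuple of ws ++ [tuple t]]; split.
    by apply: tnth_catP => // k'; rewrite (ord1 k').
  apply: indep_ext => // c Hc; apply: Hnc; by exists c.
have [m [nm [ws [H1 H2]]]] := ind n.+1.
have := @dim_bound S n vs m ws hS (fun k => Hsp _ (H1 k)) H2.
by move=> /(leq_trans nm); rewrite ltnn.
Qed.

Lemma codim_trans (S T U : vset V) a b :
  subsp S -> subsp T -> set_sub S T -> set_sub T U ->
  @codim F V S T a -> @codim F V T U b -> @codim F V S U (a + b).
Proof.
move=> hS hT sST sTU [vs [Hv1 [Hv2 Hv3]]] [ws [Hw1 [Hw2 Hw3]]].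
exists [tuple of vs ++ ws]; split; [|split].
- by apply: tnth_catP => // k; apply: sTU.
- move=> c; change (S (lc [tuple of vs ++ ws] c) -> forall k, c k = 0).
  rewrite lc_cat => HS.
  have HT2 : T (lc ws (fun k => c (rshift a k))).
    have := subspB hT (sST _ HS) (subsp_lc (fun k => c (lshift b k)) hT Hv1).
    by rewrite addrC addKr.
  have Z2 := Hw2 _ HT2.
  have Z1 : forall k, c (lshift b k) = 0.
    apply: Hv2; move: HS.
    suff -> : lc ws (fun k => c (rshift a k)) = 0 by rewrite addr0.
    by rewrite /lc big1 // => k _; rewrite Z2 scale0r.
  exact: cat_zero.
- move=> u /Hw3 [c2 /Hv3 [c1 Hc1]]; exists (catc c1 c2).
  change (S (u - lc [tuple of vs ++ ws] (catc c1 c2))).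
  by rewrite lc_catc opprD addrA addrAC.
Qed.

Lemma zsub : subsp (@zero_set F V).
Proof.
rewrite /zero_set; split=> //; split=> [u v -> ->|a v ->]; by rewrite ?addr0 ?scaler0.
Qed.
End LA.

Section Lin.
Variables (F : fieldType) (V V' : lmodType F) (f : V -> V').
Hypothesis fl : linear f.

Lemma lin0 : f 0 = 0.
Proof.
have := fl 1 0 0; rewrite !scale1r addr0 => H.
by apply: (addrI (f 0)); rewrite addr0 -H.
Qed.
Lemma linD u v : f (u + v) = f u + f v.
Proof. by have := fl 1 u v; rewrite !scale1r. Qed.
Lemma linZ a u : f (a *: u) = a *: f u.
Proof. by have := fl a u 0; rewrite !addr0 lin0 addr0. Qed.
Lemma linN u : f (- u) = - f u.
Proof. by rewrite -scaleN1r linZ scaleN1r. Qed.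
Lemma linB u v : f (u - v) = f u - f v.
Proof. by rewrite linD linN. Qed.
Lemma lin_sum (J : finType) (P : pred J) (g : J -> V) :
  f (\sum_(j | P j) g j) = \sum_(j | P j) f (g j).
Proof. by apply: (big_morph f linD lin0). Qed.
Lemma lin_lc n (vs : n.-tuple V) c : f (lc vs c) = lc (map_tuple f vs) c.
Proof. rewrite /lc lin_sum; apply: eq_bigr => k _; by rewrite linZ tnth_map. Qed.

Lemma codim_ranknull (W : vset V) a b :
  subsp W ->
  @codim F V (@zero_set F V) (fun w => W w /\ f w = 0) a ->
  @codim F V' (@zero_set F V') (fun v => exists w, W w /\ f w = v) b ->
  @codim F V (@zero_set F V) W (a + b).
Proof.
move=> hW [ks [Hk1 [Hk2 Hk3]]] [is_ [Hi1 [Hi2 Hi3]]].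
have [pw Hpw] := choiceT Hi1.
set pws := [tuple pw k | k < b].
have Hpws : forall k, tnth pws k = pw k by move=> k; rewrite tnth_mktuple.
have fpws : map_tuple f pws = is_.
  apply: eq_from_tnth => k; rewrite tnth_map Hpws; by case: (Hpw k).
exists [tuple of ks ++ pws]; split; [|split].
- apply: tnth_catP => k; first by case: (Hk1 k).
  by rewrite Hpws; case: (Hpw k).
- move=> c; change (lc [tuple of ks ++ pws] c = 0 -> forall k, c k = 0).
  rewrite lc_cat => H0.
  have := congr1 f H0; rewrite linD !lin_lc lin0 fpws.
  have -> : lc (map_tuple f ks) (fun k => c (lshift b k)) = 0.
    rewrite /lc big1 // => k _; rewrite tnth_map; by case: (Hk1 k) => _ ->; rewrite scaler0.
  rewrite add0r => /Hi2 Z2.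
  have Z1 : forall k, c (lshift b k) = 0.
    apply: Hk2; move: H0; rewrite /zero_set.
    suff -> : lc pws (fun k => c (rshift a k)) = 0 by rewrite addr0.
    by rewrite /lc big1 // => k _; rewrite Z2 scale0r.
  exact: cat_zero.
- move=> w Ww.
  have [c2 Hc2] := Hi3 (f w) (ex_intro _ w (conj Ww erefl)).
  have Kw : W (w - lc pws c2) /\ f (w - lc pws c2) = 0.
    split; first by apply: subspB => //; apply: subsp_lc => // k; rewrite Hpws; case: (Hpw k).
    rewrite linB lin_lc fpws; exact: Hc2.
  have [c1 Hc1] := Hk3 _ Kw.
  exists (catc c1 c2); change (w - lc [tuple of ks ++ pws] (catc c1 c2) = 0).
  by rewrite lc_catc opprD addrA addrAC.
Qed.
End Lin.

Section PM.
Variables (I E : finType) (src tgt : E -> I) (C : fieldType).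
Notation pm := (pmod src tgt C).
Notation hs := (hs src tgt).
Notation ht := (ht src tgt).

Section OneMod.
Variable M : pm.
Notation V := (carrier M).
Implicit Types (S T : vset V) (v w t : V).

Lemma idem0 k : idem k (0 : V) = 0. Proof. exact: lin0 (idem_lin k). Qed.
Lemma idemD k v w : idem k (v + w) = idem k v + idem k w. Proof. exact: (linD (idem_lin k) v w). Qed.
Lemma idemZ k a v : idem k (a *: v) = a *: idem k v. Proof. exact: (linZ (idem_lin k) a v). Qed.
Lemma idemN k v : idem k (- v) = - idem k v. Proof. exact: (linN (idem_lin k) v). Qed.
Lemma idemB k v w : idem k (v - w) = idem k v - idem k w. Proof. exact: (linB (idem_lin k) v w). Qed.
Lemma idem_sum' k (J : finType) (P : pred J) (g : J -> V) :
  idem k (\sum_(j | P j) g j) = \sum_(j | P j) idem k (g j).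
Proof. exact: (lin_sum (idem_lin k) P g). Qed.
Lemma act0 h : act h (0 : V) = 0. Proof. exact: lin0 (act_lin h). Qed.
Lemma actD h v w : act h (v + w) = act h v + act h w. Proof. exact: (linD (act_lin h) v w). Qed.
Lemma actZ h a v : act h (a *: v) = a *: act h v. Proof. exact: (linZ (act_lin h) a v). Qed.
Lemma actN h v : act h (- v) = - act h v. Proof. exact: (linN (act_lin h) v). Qed.
Lemma actB h v w : act h (v - w) = act h v - act h w. Proof. exact: (linB (act_lin h) v w). Qed.
Lemma act_sum h (J : finType) (P : pred J) (g : J -> V) :
  act h (\sum_(j | P j) g j) = \sum_(j | P j) act h (g j).
Proof. exact: (lin_sum (act_lin h) P g). Qed.

Lemma idem_idem k v : idem k (idem k v) = idem k v.
Proof. by rewrite idem_orth eqxx. Qed.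
Lemma idem_ne k l v : k != l -> idem k (idem l v) = 0.
Proof. by move=> /negbTE H; rewrite idem_orth H. Qed.
Lemma idem_at k l v : idem l v = v -> idem k v = if k == l then v else 0.
Proof. by move=> H; rewrite -{1}H idem_orth; case: eqP => // ->. Qed.
Lemma act_hs h v : act h (idem (hs h) v) = act h v.
Proof. by rewrite [RHS]act_idem [LHS]act_idem idem_idem. Qed.
Lemma act_other h k v : k != hs h -> act h (idem k v) = 0.
Proof. by move=> H; rewrite act_idem idem_orth eq_sym (negbTE H) act0 idem0. Qed.
Lemma idem_act l h v : idem l (act h v) = if l == ht h then act h v else 0.
Proof. by rewrite act_idem idem_orth; case: eqP => // ->. Qed.

Lemma sub_subsp S : is_submod S -> subsp S.
Proof. by case=> [H0 [HD [HZ _]]]. Qed.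
Lemma sub0 S : is_submod S -> S 0. Proof. by case. Qed.
Lemma subD S u v : is_submod S -> S u -> S v -> S (u + v). Proof. by case=> _ [H _]; apply: H. Qed.
Lemma subZ S a v : is_submod S -> S v -> S (a *: v). Proof. by case=> _ [_ [H _]]; apply: H. Qed.
Lemma subI S k v : is_submod S -> S v -> S (idem k v). Proof. by case=> _ [_ [_ [H _]]]; apply: H. Qed.
Lemma subA S h v : is_submod S -> S v -> S (act h v). Proof. by case=> _ [_ [_ [_ H]]]; apply: H. Qed.
Lemma subN S v : is_submod S -> S v -> S (- v).
Proof. by move=> hS; apply: subspN (sub_subsp hS). Qed.
Lemma subB S u v : is_submod S -> S u -> S v -> S (u - v).
Proof. by move=> hS; apply: subspB (sub_subsp hS). Qed.
Lemma subsum S (J : finType) (P : pred J) (g : J -> V) :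
  is_submod S -> (forall j, P j -> S (g j)) -> S (\sum_(j | P j) g j).
Proof. by move=> hS; apply: subsp_sum (sub_subsp hS). Qed.

Lemma zero_subsp : subsp (@zero_set C V).
Proof.
rewrite /zero_set; split=> //; split=> [u v -> ->|a v ->]; by rewrite ?addr0 ?scaler0.
Qed.
Lemma zero_submod : is_submod (@zero_set C V).
Proof.
rewrite /zero_set; split=> //; split; [|split; [|split]].
- by move=> u v -> ->; rewrite addr0.
- by move=> a v ->; rewrite scaler0.
- by move=> k v ->; rewrite idem0.
- by move=> h v ->; rewrite act0.
Qed.

Definition addC S w : vset V := fun t => exists a, S (t - a *: w).
Definition sumset S T : vset V := fun t => exists a b, S a /\ T b /\ t = a + b.
Definition Jset S : vset V :=
  fun t => exists u : E + E -> V, (forall h, S (u h)) /\ t = \sum_h act h (u h).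

Lemma addC_submod S k w :
  is_submod S -> idem k w = w -> (forall h, S (act h w)) -> is_submod (addC S w).
Proof.
move=> hS Hw Hact; split; [|split; [|split; [|split]]].
- by exists 0; rewrite scale0r subr0; apply: sub0.
- move=> u v [a Ha] [b Hb]; exists (a + b).
  have := subD hS Ha Hb; congr S; rewrite scalerDl; by rewrite opprD addrACA.
- move=> a v [b Hb]; exists (a * b).
  have := subZ a hS Hb; congr S; by rewrite scalerBr scalerA.
- move=> l v [a Ha]; exists (if l == k then a else 0).
  have := subI l hS Ha; congr S; rewrite idemB idemZ (idem_at l Hw).
  by case: eqP; rewrite ?scaler0 ?scale0r.
- move=> h v [a Ha]; exists 0; rewrite scale0r subr0.
  have := subD hS (subA h hS Ha) (subZ a hS (Hact h)).
  by rewrite actB actZ subrK.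
Qed.

Lemma addC_sub S w : is_submod S -> set_sub S (addC S w).
Proof. by move=> hS t St; exists 0; rewrite scale0r subr0. Qed.
Lemma addC_w S w : is_submod S -> addC S w w.
Proof. by move=> hS; exists 1; rewrite scale1r subrr; apply: sub0. Qed.

Lemma addC_in S w : is_submod S -> S w -> set_eq (addC S w) S.
Proof.
move=> hS Sw t; split; last exact: addC_sub.
move=> [a Ha]; have := subD hS Ha (subZ a hS Sw); by rewrite subrK.
Qed.

Lemma fd_nilp_eq S S' : set_eq S S' -> fd_nilpotent S -> fd_nilpotent S'.
Proof.
move=> eS [[n Hn] [m [ch [H0 [Hm [H1 H2]]]]]]; split.
  by exists n; apply: codim_eq Hn => //.
exists m, ch; split => //; split => //.
by move=> t; split; [move/Hm/eS|move/eS/Hm].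
Qed.

Lemma fd_nilp_zero : fd_nilpotent (@zero_set C V).
Proof.
split; first by exists 0%N; exists [tuple]; split; [case|split; [move=> c _ []|move=> t ->; exists (fun _ => 0); rewrite /zero_set big_ord0 subr0]].
exists 0%N, (fun _ => @zero_set C V); split => //; split => //; split => //.
by move=> l _; apply: zero_submod.
Qed.

Lemma codim_one S w : subsp S -> ~ S w ->
  @codim C V S (addC S w) 1.
Proof.
move=> hS nSw; exists [tuple w]; split; [|split].
- move=> k; exists 1; rewrite (ord1 k) /= (tnth_nth 0) /= scale1r subrr; by case: hS.
- move=> c; change (S (lc [tuple w] c) -> forall k, c k = 0); rewrite lc1 => Hc k.
  rewrite (ord1 k); apply/eqP; apply: contraT => cn0; exfalso; apply: nSw.
  have := proj2 (proj2 hS) (c ord0)^-1 _ Hc; by rewrite scalerA mulVf // scale1r.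
- move=> t [a Ha]; exists (fun _ => a); change (S (t - lc [tuple w] (fun _ => a))).
  by rewrite lc1.
Qed.

Lemma fd_nilp_step S k w :
  is_submod S -> fd_nilpotent S -> idem k w = w -> (forall h, S (act h w)) ->
  fd_nilpotent (addC S w).
Proof.
move=> hS fS Hw Hact; case: (classic (S w)) => Sw.
  by apply: fd_nilp_eq fS => t; split; [apply: addC_sub|move/(addC_in hS Sw)].
case: fS => [[n Hn] [m [ch [H0 [Hm [H1 H2]]]]]]; split.
  exists (n + 1)%N; apply: (codim_trans (T := S)) => //.
  - exact: zero_subsp.
  - exact: sub_subsp.
  - by move=> t ->; apply: sub0.
  - exact: addC_sub.
  - exact: codim_one (sub_subsp hS) Sw.
exists m.+1, (fun l => if (l <= m)%N then ch l else addC S w); split; [|split; [|split]].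
- by [].
- by rewrite ltnn.
- move=> l; case: (leqP l m) => [lm _|ml lm]; first exact: H1.
  exact: addC_submod hS Hw Hact.
- move=> l; rewrite ltnS leq_eqVlt; case/orP => [/eqP ->|lm].
    rewrite eqxx ltnn /=; exists k; split.
      by move=> t /Hm St; apply: addC_sub.
    exists w; split; first exact: addC_w.
    split; first by move/Hm.
    split => //; split; first by move=> h; apply/Hm.
    by move=> t [a Ha]; exists a; apply/Hm.
  by rewrite lm orbT; apply: H2.
Qed.

End OneMod.
End PM.

Section PM2.
Variables (I E : finType) (src tgt : E -> I) (C : fieldType).
Notation pm := (pmod src tgt C).
Notation hs := (hs src tgt).
Notation ht := (ht src tgt).

Section OneMod.
Variable M : pm.
Notation V := (carrier M).
Implicit Types (S T A B : vset V) (v w t : V).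

Lemma submod_eq S S' : set_eq S S' -> is_submod S -> is_submod S'.
Proof.
move=> eS [H0 [HD [HZ [HI HA]]]]; split; [|split; [|split; [|split]]].
- exact/eS.
- by move=> u v /eS Su /eS Sv; apply/eS; apply: HD.
- by move=> a v /eS Sv; apply/eS; apply: HZ.
- by move=> k v /eS Sv; apply/eS; apply: HI.
- by move=> h v /eS Sv; apply/eS; apply: HA.
Qed.

Lemma sumset_submod S T : is_submod S -> is_submod T -> is_submod (sumset S T).
Proof.
move=> hS hT; split; [|split; [|split; [|split]]].
- by exists 0, 0; rewrite addr0; split; [apply: sub0|split; [apply: sub0|]].
- move=> u v [a [b [Sa [Tb ->]]]] [a' [b' [Sa' [Tb' ->]]]].
  exists (a + a'), (b + b'); split; [exact: subD|split; [exact: subD|]].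
  by rewrite addrACA.
- move=> c v [a [b [Sa [Tb ->]]]]; exists (c *: a), (c *: b).
  by split; [exact: subZ|split; [exact: subZ|rewrite scalerDr]].
- move=> k v [a [b [Sa [Tb ->]]]]; exists (idem k a), (idem k b).
  by split; [exact: subI|split; [exact: subI|rewrite idemD]].
- move=> h v [a [b [Sa [Tb ->]]]]; exists (act h a), (act h b).
  by split; [exact: subA|split; [exact: subA|rewrite actD]].
Qed.

Lemma Jset_submod S : is_submod S -> is_submod (Jset S).
Proof.
move=> hS; split; [|split; [|split; [|split]]].
- exists (fun _ => 0); split; first by move=> h; apply: sub0.
  by rewrite big1 // => h _; rewrite act0.
- move=> u v [f [Hf ->]] [g [Hg ->]]; exists (fun h => f h + g h); split.
    by move=> h; apply: subD.
  by rewrite -big_split; apply: eq_bigr => h _; rewrite actD.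
- move=> a v [f [Hf ->]]; exists (fun h => a *: f h); split.
    by move=> h; apply: subZ.
  by rewrite scaler_sumr; apply: eq_bigr => h _; rewrite actZ.
- move=> k v [f [Hf ->]]; exists (fun h => if k == ht h then f h else 0); split.
    by move=> h; case: eqP => _; [apply: Hf|apply: sub0].
  rewrite idem_sum'; apply: eq_bigr => h _; rewrite idem_act.
  by case: eqP => _; rewrite ?act0.
- move=> h0 v [f [Hf ->]]; exists (fun h => if h == h0 then \sum_h act h (f h) else 0).
  split.
    move=> h; case: eqP => _; last by apply: sub0.
    by apply: subsum => // h' _; apply: subA.
  rewrite [RHS](eq_bigr (fun h => if h == h0 then act h0 (\sum_h act h (f h)) else 0)).
    by rewrite -big_mkcond big_pred1_eq.
  by move=> h _; case: eqP => [->|_]; rewrite ?act0.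
Qed.

Lemma act_delta h0 v : \sum_h act h (if h == h0 then v else 0) = act h0 v.
Proof.
rewrite (eq_bigr (fun h => if h == h0 then act h0 v else 0)).
  by rewrite -big_mkcond big_pred1_eq.
by move=> h _; case: eqP => [->|_]; rewrite ?act0.
Qed.

Lemma Jset_act S h v : is_submod S -> S v -> Jset S (act h v).
Proof.
move=> hS Sv; exists (fun h' => if h' == h then v else 0); split; last by rewrite act_delta.
by move=> h'; case: eqP => _ //; apply: sub0.
Qed.

Lemma Jset_sub S : is_submod S -> set_sub (Jset S) S.
Proof. by move=> hS t [f [Hf ->]]; apply: subsum => // h _; apply: subA. Qed.

Lemma chain_J X Y j t h :
  is_submod X -> quot_is_simple_s X Y j -> Y t -> X (act h t).
Proof.
move=> hX [_ [v [Yv [_ [_ [Hact Hsp]]]]]] /Hsp [a Ha].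
have := subD hX (subA h hX Ha) (subZ a hX (Hact h)); by rewrite actB actZ subrK.
Qed.

Lemma desc A B n (ch : nat -> vset V) :
  is_submod A -> set_eq (ch 0%N) (@zero_set C V) ->
  (forall k, (k <= n)%N -> is_submod (ch k)) ->
  (forall k, (k < n)%N -> exists j, quot_is_simple_s (ch k) (ch k.+1) j) ->
  set_sub B (sumset A (ch n)) -> set_sub B (sumset A (Jset B)) -> set_sub B A.
Proof.
move=> hA H0 H1 H2 Hn HJ.
have ind : forall d, (d <= n)%N -> set_sub B (sumset A (ch (n - d)%N)).
  elim => [_|d IH dn]; first by rewrite subn0.
  move=> t /HJ [a [b [Aa [[u [Hu ->]] ->]]]].
  have [ab Hab] := choiceT (fun h => IH (ltnW dn) _ (Hu h)).
  set k := (n - d.+1)%N.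
  have kS : k.+1 = (n - d)%N by rewrite /k subnSK.
  have kn : (k < n)%N by rewrite kS; rewrite /k in kS; lia.
  have [j Hj] := H2 k kn.
  have Hk : is_submod (ch k) by apply: H1; apply: ltnW.
  have [ub Hub] := choiceT Hab.
  exists (a + \sum_h act h (ab h)), (\sum_h act h (ub h)); split; [|split].
  - apply: subD => //; apply: subsum => // h _; apply: subA => //.
    by case: (Hub h).
  - apply: subsum => // h _; apply: (chain_J (Y := ch k.+1) (j := j)) => //.
    by rewrite kS; case: (Hub h) => _ [].
  - rewrite -addrA -big_split /=; congr (_ + _); apply: eq_bigr => h _.
    by case: (Hub h) => _ [_ ->]; rewrite actD.
move=> t Bt; have := ind n (leqnn n) t Bt; rewrite subnn.
by move=> [a [b [Aa [/H0 -> ->]]]]; rewrite addr0.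
Qed.
End OneMod.
End PM2.

Section PM3.
Variables (I E : finType) (src tgt : E -> I) (C : fieldType).
Notation pm := (pmod src tgt C).

Definition img (M N : pm) (g : carrier N -> carrier M) (T : vset (carrier N)) : vset (carrier M) :=
  fun m => exists t, T t /\ m = g t.

Lemma fd_nilp_sumimg (M N : pm) (g : carrier N -> carrier M) S T :
  is_morph g -> is_submod S -> fd_nilpotent S -> is_submod T -> fd_nilpotent T ->
  is_submod (sumset S (img g T)) /\ fd_nilpotent (sumset S (img g T)).
Proof.
move=> [gl [gI gA]] hS fS hT [_ [n [ch [H0 [Hn [H1 H2]]]]]].
have g0 : g 0 = 0 := lin0 gl.
have ind : forall k, (k <= n)%N ->
    is_submod (sumset S (img g (ch k))) /\ fd_nilpotent (sumset S (img g (ch k))).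
  elim => [_|k IH kn].
    have e0 : set_eq S (sumset S (img g (ch 0%N))).
      move=> t; split.
        by move=> St; exists t, 0; split => //; split; [exists 0; split; [apply/H0|]|rewrite addr0].
      by move=> [a [b [Sa [[b' [/H0 -> ->]] ->]]]]; rewrite g0 addr0.
    split; [exact: submod_eq e0 hS|exact: fd_nilp_eq e0 fS].
  have [hk fk] := IH (ltnW kn).
  have [j [sub [v [Yv [nXv [Iv [Av Sp]]]]]]] := H2 k kn.
  have e1 : set_eq (addC (sumset S (img g (ch k))) (g v)) (sumset S (img g (ch k.+1))).
    move=> t; split.
      move=> [c [a [b [Sa [[b' [Xb' Eb]] Et]]]]].
      exists a, (g (b' + c *: v)); split => //; split.
        exists (b' + c *: v); split => //; apply: (subD (H1 _ kn)); [exact: sub|exact: (subZ c (H1 _ kn))].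
      by rewrite (linD gl) (linZ gl) -Eb addrA -Et subrK.
    move=> [a [b [Sa [[b' [Yb' ->]] ->]]]].
    have [c Hc] := Sp _ Yb'.
    exists c, a, (g (b' - c *: v)); split => //; split; first by exists (b' - c *: v).
    by rewrite (linB gl) (linZ gl) addrA.
  have Iw : idem j (g v) = g v by rewrite -gI Iv.
  have Aw : forall h, sumset S (img g (ch k)) (act h (g v)).
    move=> h; exists 0, (act h (g v)); split; first exact: sub0.
    by split; [exists (act h v); split => //; rewrite gA|rewrite add0r].
  split.
    by apply: submod_eq e1 _; apply: addC_submod Iw Aw.
  by apply: fd_nilp_eq e1 _; apply: fd_nilp_step Iw Aw.
have [hn fn] := ind n (leqnn n).
have e : set_eq (sumset S (img g (ch n))) (sumset S (img g T)).
  move=> t; split; move=> [a [b [Sa [[b' [Xb' ->]] ->]]]]; exists a, (g b'); split => //;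
    split => //; exists b'; split => //; by apply/Hn.
split; [exact: submod_eq e hn|exact: fd_nilp_eq e fn].
Qed.
End PM3.

Section Crys.
Variables (I E : finType) (src tgt : E -> I) (C : fieldType).
Notation pm := (pmod src tgt C).
Notation hs := (hs src tgt).
Notation ht := (ht src tgt).
Variable Q : pm.
Notation V := (carrier Q).
Implicit Types (S T A B x y z m : vset V) (v w t r : V).

Lemma subsp_at S k : is_submod S -> subsp (at_vertex k S).
Proof.
move=> hS; split; [|split].
- by split; [apply: sub0|rewrite idem0].
- by move=> u v [Su Iu] [Sv Iv]; split; [apply: subD|rewrite idemD Iu Iv].
- by move=> a v [Sv Iv]; split; [apply: subZ|rewrite idemZ Iv].
Qed.

Lemma subsp_addC S w : subsp S -> subsp (addC S w).
Proof.
move=> hS; split; [|split].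
- by exists 0; rewrite scale0r subr0; case: hS.
- move=> u v [a Ha] [b Hb]; exists (a + b).
  have := proj1 (proj2 hS) _ _ Ha Hb; congr S; rewrite scalerDl; by rewrite opprD addrACA.
- move=> a v [b Hb]; exists (a * b).
  have := proj2 (proj2 hS) a _ Hb; congr S; by rewrite scalerBr scalerA.
Qed.

Definition spanS S n (vs : n.-tuple V) : vset V := fun t => exists c, S (t - lc vs c).

Lemma subsp_spanS S n (vs : n.-tuple V) : subsp S -> subsp (spanS S vs).
Proof.
move=> hS; split; [|split].
- by exists (fun _ => 0); rewrite lc0 subr0; case: hS.
- move=> u v [c1 H1] [c2 H2]; exists (fun k => c1 k + c2 k).
  have := proj1 (proj2 hS) _ _ H1 H2; congr S; by rewrite lcD opprD addrACA.
- move=> a v [c Hc]; exists (fun k => a * c k).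
  have := proj2 (proj2 hS) a _ Hc; congr S; by rewrite lcZ scalerBr.
Qed.

Lemma spanS_sub S n (vs : n.-tuple V) : set_sub S (spanS S vs).
Proof. by move=> t St; exists (fun _ => 0); rewrite lc0 subr0. Qed.

Lemma J_in_max x m : is_submod x -> fd_nilpotent x -> maximal_sub x m ->
  set_sub (Jset x) m.
Proof.
move=> hx [_ [n [ch [H0 [Hn [H1 H2]]]]]] [hm [mx [[v [xv nmv]] Hmax]]].
set w := sumset m (Jset x).
have hw : is_submod w := sumset_submod hm (Jset_submod hx).
have mw : set_sub m w by move=> t mt; exists t, 0; split => //; split; [apply: sub0; exact: Jset_submod|rewrite addr0].
have wx : set_sub w x.
  by move=> t [a [b [ma [Jb ->]]]]; apply: subD => //; [exact: mx|exact: Jset_sub Jb].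
case: (Hmax w hw mw wx) => ew.
  by move=> t Jt; apply/ew; exists 0, t; split; [apply: sub0|split; [|rewrite add0r]].
exfalso; apply: nmv.
have s1 : set_sub x (sumset m (ch n)).
  by move=> t xt; exists 0, t; split; [apply: sub0|split; [apply/Hn|rewrite add0r]].
have s2 : set_sub x (sumset m (Jset x)) by move=> t /ew.
exact: (desc hm H0 H1 H2 s1 s2 xv).
Qed.

Lemma max_avoid x k r : is_submod x -> fd_nilpotent x -> x r -> idem k r = r ->
  ~ Jset x r -> exists m, maximal_sub x m /\ ~ m r.
Proof.
move=> hx [[n [bs [Hb1 [Hb2 Hb3]]]] _] xr Ir nJr.
set JX := at_vertex k (Jset x).
have hJX : subsp JX := subsp_at k (Jset_submod hx).
set S' := addC JX r.
have hS' : subsp S' := subsp_addC r hJX.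
have [n' [vs [Hv1 [Hv2 Hv3]]]] : exists n', @codim C V S' (at_vertex k x) n'.
  apply: (@codim_exists C V S' _ n (map_tuple (idem k) bs)) => // t [xt It].
  have [c Hc] := Hb3 t xt; exists c.
  move: Hc; rewrite /zero_set => /eqP; rewrite subr_eq0 => /eqP Et.
  change (t = lc bs c) in Et.
  rewrite -(lin_lc (idem_lin k)) -Et It subrr; by case: hS'.
set H := spanS JX vs.
have hH : subsp H := subsp_spanS vs hJX.
set m := fun t => x t /\ H (idem k t).
have inS' : set_sub JX S' by move=> t Jt; exists 0; rewrite scale0r subr0.
have nmr : ~ m r.
  move=> [_ [c Hc]]; rewrite Ir in Hc; apply: nJr.
  have S'r : S' r by exists 1; rewrite scale1r subrr; case: hJX.
  have S'l : S' (lc vs c).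
    have := subspB hS' S'r (inS' _ Hc); by rewrite opprB addrC subrK.
  have c0 := Hv2 c S'l.
  move: Hc; have -> : lc vs c = 0 by rewrite /lc big1 // => k' _; rewrite c0 scale0r.
  by rewrite subr0 => -[].
have Hsub : is_submod m.
  split; [|split; [|split; [|split]]].
  - split; first exact: sub0.
    by rewrite idem0; case: hH.
  - move=> u v [xu Hu] [xv Hv]; split; first exact: subD.
    by rewrite idemD; apply: (proj1 (proj2 hH)).
  - move=> a v [xv Hv]; split; first exact: subZ.
    by rewrite idemZ; apply: (proj2 (proj2 hH)).
  - move=> l v [xv Hv]; split; first exact: (subI l hx xv).
    rewrite idem_orth; case: eqP => _ //; by case: hH.
  - move=> h v [xv Hv]; split; first exact: (subA h hx xv).
    apply: spanS_sub; split; last exact: idem_idem.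
    apply: subI; first exact: Jset_submod.
    exact: Jset_act.
exists m; split => //; split => //; split; first by move=> t [].
split; first by exists r.
move=> w hw mw wx.
case: (classic (exists t, w t /\ ~ m t)) => [[t [wt nmt]]|nex]; last first.
  left => t; split => [wt|]; last exact: mw.
  by apply: NNPP => nmt; apply: nex; exists t.
right => t'; split; first exact: wx.
move=> xt'.
have xt := wx _ wt.
have [c Hc] := Hv3 (idem k t) (conj (subI k hx xt) (idem_idem k t)).
have [b Hb] := Hc.
have Hb' : H (idem k t - b *: r) by exists c; rewrite addrAC.
have b0 : b != 0.
  apply: contraT; rewrite negbK => /eqP b0; exfalso; apply: nmt; split => //.
  by move: Hb'; rewrite b0 scale0r subr0.
have [c' [a Ha]] := Hv3 (idem k t') (conj (subI k hx xt') (idem_idem k t')).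
have Ha' : H (idem k t' - a *: r) by exists c'; rewrite addrAC.
set q := a / b.
have mt'' : m (t' - q *: idem k t).
  split; first by apply: subB => //; apply: subZ => //; apply: subI.
  have -> : idem k (t' - q *: idem k t) = (idem k t' - a *: r) - q *: (idem k t - b *: r).
    rewrite idemB idemZ idem_idem scalerBr scalerA /q mulfVK // opprB addrA subrK //.
  by apply: subspB => //; apply: (proj2 (proj2 hH)).
have := subD hw (mw _ mt'') (subZ q hw (subI k hw wt)).
by rewrite subrK.
Qed.
End Crys.

Section Crys2.
Variables (I E : finType) (src tgt : E -> I) (C : fieldType).
Notation pm := (pmod src tgt C).
Notation hs := (hs src tgt).
Notation ht := (ht src tgt).
Variable Q : pm.
Notation V := (carrier Q).
Implicit Types (S T A B x y z m : vset V) (v w t r : V).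

Lemma rad_at x k : is_submod x -> fd_nilpotent x ->
  set_eq (at_vertex k (radical x)) (at_vertex k (Jset x)).
Proof.
move=> hx fx r; split.
  move=> [[xr Hall] Ir]; split => //.
  apply: NNPP => nJ; have [m [Hm nmr]] := max_avoid hx fx xr Ir nJ.
  by apply: nmr; apply: Hall.
move=> [Jr Ir]; split => //; split; first exact: Jset_sub Jr.
by move=> m Hm; apply: (J_in_max hx fx Hm).
Qed.

Lemma capset_submod A B : is_submod A -> is_submod B -> is_submod (fun t => A t /\ B t).
Proof.
move=> hA hB; split; [|split; [|split; [|split]]].
- by split; apply: sub0.
- by move=> u v [? ?] [? ?]; split; apply: subD.
- by move=> a v [? ?]; split; apply: subZ.
- by move=> k v [? ?]; split; apply: subI.
- by move=> h v [? ?]; split; apply: subA.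
Qed.

Lemma simple_act x z w h : loc_nilpotent Q -> is_submod x ->
  simple_over x z -> z w -> x (act h w).
Proof.
move=> lnQ hx [hz [xz [[v0 [zv0 nxv0]] Hsim]]] zw.
set z' := sumset x (Jset z).
have hz' : is_submod z' := sumset_submod hx (Jset_submod hz).
have xz' : set_sub x z'.
  by move=> t xt; exists t, 0; split => //; split; [apply: sub0; apply: Jset_submod|rewrite addr0].
have z'z : set_sub z' z.
  by move=> t [a [b [xa [Jb ->]]]]; apply: subD => //; [exact: xz|exact: Jset_sub Jb].
case: (Hsim z' hz' xz' z'z) => ez.
  apply: (proj1 (ez _)); exists 0, (act h w); split; first exact: sub0.
  by split; [apply: Jset_act|rewrite add0r].
exfalso.
have [S [hS [[_ [n [ch [H0 [Hn [H1 H2]]]]]] Sv0]]] := lnQ v0.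
set w' := fun t => z t /\ sumset x S t.
have hw' : is_submod w' := capset_submod hz (sumset_submod hx hS).
have xw' : set_sub x w'.
  by move=> t xt; split; [exact: xz|exists t, 0; split => //; split; [apply: sub0|rewrite addr0]].
have w'z : set_sub w' z by move=> t [].
case: (Hsim w' hw' xw' w'z) => ew.
  by apply: nxv0; apply: (proj1 (ew v0)); split => //; exists 0, v0; split; [exact: sub0|split => //; rewrite add0r].
have s1 : set_sub z (sumset x (ch n)).
  move=> t zt; have [_ [a [b [xa [Sb ->]]]]] := proj2 (ew t) zt.
  exists a, b; split => //; split => //; exact/Hn.
have s2 : set_sub z (sumset x (Jset z)) by move=> t zt; apply: (proj2 (ez t)).
exact: nxv0 (desc hx H0 H1 H2 s1 s2 zv0).
Qed.

Definition Wsoc x k : vset V := fun t => idem k t = t /\ forall h, x (act h t).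

Lemma soc_at x k : loc_nilpotent Q -> is_submod x ->
  set_eq (at_vertex k (socle_over x)) (Wsoc x k).
Proof.
move=> lnQ hx t; split.
  move=> [[x0 [s [x0x [Hs Et]]]] It]; split => // h.
  rewrite Et actD; apply: subD => //; first exact: subA.
  rewrite (big_morph (act h) (actD h) (act0 Q h)) big_seq.
  apply: (big_ind x); [exact: sub0|by move=> ? ?; apply: subD|].
  move=> w /Hs [z [Hz zw]]; exact: simple_act lnQ hx Hz zw.
move=> [It HA]; split => //.
case: (classic (x t)) => xt.
  by exists t, [::]; split => //; split => //; rewrite big_nil addr0.
exists 0, [:: t]; split; first exact: sub0.
split; last by rewrite big_seq1 add0r.
move=> w; rewrite inE => /eqP ->; exists (addC x t); split; last exact: addC_w.
split; first exact: addC_submod It HA.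
split; first exact: addC_sub.
split; first by exists t; split => //; apply: addC_w.
move=> w' hw' xw' w'z.
case: (classic (exists u, w' u /\ ~ x u)) => [[u [w'u nxu]]|nex]; last first.
  left => v; split => [w'v|]; last exact: xw'.
  by apply: NNPP => nxv; apply: nex; exists v.
right => v; split; first exact: w'z.
have [a Ha] := w'z _ w'u.
have a0 : a != 0.
  apply: contraT; rewrite negbK => /eqP a0; exfalso; apply: nxu.
  by move: Ha; rewrite a0 scale0r subr0.
have w't : w' t.
  have := subZ a^-1 hw' (subB hw' w'u (xw' _ Ha)).
  by rewrite opprB addrC subrK scalerA mulVf // scale1r.
move=> [b Hb]; have := subD hw' (xw' _ Hb) (subZ b hw' w't); by rewrite subrK.
Qed.
End Crys2.

Section Crys3.
Variables (I E : finType) (src tgt : E -> I) (C : fieldType).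
Notation pm := (pmod src tgt C).
Notation hs := (hs src tgt).
Notation ht := (ht src tgt).
Variable Q : pm.
Notation V := (carrier Q).
Implicit Types (S T A B x y z m : vset V) (v w t r : V).

Definition Kset k : vset V := fun w => idem k w = w /\ forall h, act h w = 0.

Lemma K_dim (lam : I -> nat) k : is_q_lambda lam Q ->
  @codim C V (@zero_set C V) (Kset k) (lam k).
Proof.
move=> [_ [_ [f [[fl [fI fA]] [finj fess]]]]].
pose T_ := fun j => 'I_(lam j).
pose dl (l : 'I_(lam k)) : carrier (s_lambda src tgt C lam) :=
  [ffun t => if t == Tagged T_ l then (1 : C^o) else 0].
have dlI : forall l, slam_idem k (dl l) = dl l.
  move=> l; apply/ffunP => t; rewrite !ffunE.
  case: eqP => [//|nt]; case: eqP => // Et; by rewrite Et in nt.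
pose vs := [tuple f (dl l) | l < lam k].
have vsE : forall l, tnth vs l = f (dl l) by move=> l; rewrite tnth_mktuple.
exists vs; split; [|split].
- move=> l; rewrite vsE; split; first by rewrite -fI /= dlI.
  move=> h; rewrite -fA /= /slam_act; exact: lin0.
- move=> c; change (lc vs c = 0 -> forall l, c l = 0) => Hc l.
  have : f (\sum_l' c l' *: dl l') = f 0.
    rewrite (lin_sum fl) (lin0 fl) -[RHS]Hc /lc; apply: eq_bigr => l' _.
    by rewrite (linZ fl) vsE.
  move/finj => /ffunP /(_ (Tagged T_ l)); rewrite sum_ffunE ffunE.
  rewrite (bigD1 l) //= big1.
    by rewrite !ffunE eqxx addr0 => H; rewrite -H /GRing.scale /= mulr1.
  move=> l' nl'; rewrite !ffunE eq_Tagged /=.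
  by rewrite eq_sym (negbTE nl') /GRing.scale /= mulr0.
- move=> w [Iw Aw].
  case: (eqVneq w 0) => [->|wn0].
    by exists (fun _ => 0); change (0 - lc vs (fun _ => 0) = 0); rewrite lc0 subr0.
  set S := fun t => exists a, t = a *: w.
  have hS : is_submod S.
    split; [|split; [|split; [|split]]].
    - by exists 0; rewrite scale0r.
    - by move=> u v [a ->] [b ->]; exists (a + b); rewrite scalerDl.
    - by move=> a v [b ->]; exists (a * b); rewrite scalerA.
    - move=> l v [a ->]; exists (if l == k then a else 0).
      by rewrite idemZ (idem_at l Iw); case: eqP; rewrite ?scaler0 ?scale0r.
    - by move=> h v [a ->]; exists 0; rewrite actZ Aw scaler0 scale0r.
  have ex1 : exists v, S v /\ v <> 0 by exists w; split; [exists 1; rewrite scale1r|exact/eqP].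
  have [w' [[a Ew'] [w'n0 [u Eu]]]] := fess S hS ex1.
  have an0 : a != 0 by apply/eqP => a0; apply: w'n0; rewrite Ew' a0 scale0r.
  set u' := slam_idem k (a^-1 *: u).
  have Ew : w = f u'.
    have -> : u' = idem (p := s_lambda src tgt C lam) k (a^-1 *: u) by [].
    by rewrite fI (linZ fl) -Eu Ew' scalerA mulVf // scale1r Iw.
  have Eu' : u' = \sum_l (u' (Tagged T_ l) : C^o) *: dl l.
    apply/ffunP => t; rewrite sum_ffunE.
    case: t => j l0.
    case: (eqVneq j k) => [ejk|njk].
      subst j; rewrite (bigD1 l0) //= big1.
        rewrite !ffunE eq_Tagged /= addr0 /GRing.scale /=; rewrite ifT; last exact: eqxx. rewrite ?eqxx. exact: (esym (mulr1 _)).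
      move=> l' nl'; rewrite !ffunE eq_Tagged /= eqxx /GRing.scale /=.
      case: eqP => [E0|_]; last exact: mulr0.
      by move: nl'; rewrite E0 eqxx.
    rewrite big1; first by rewrite /u' ffunE /= (negbTE njk).
    move=> l' _; rewrite !ffunE /GRing.scale /= eqxx.
    case: eqP => [E0|_]; last exact: mulr0.
    by have := congr1 tag E0 => /= /eqP; rewrite (negbTE njk).
  exists (fun l => u' (Tagged T_ l)).
  rewrite /zero_set; change (w - lc vs (fun l => u' (Tagged T_ l)) = 0).
  rewrite Ew {1}Eu' (lin_sum fl) /lc; apply/eqP; rewrite subr_eq0; apply/eqP.
  apply: eq_bigr => l _.
  by rewrite (linZ fl) vsE.
Qed.
End Crys3.

Section Crys4.
Variables (I E : finType) (src tgt : E -> I) (C : fieldType).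
Notation pm := (pmod src tgt C).
Notation hs := (hs src tgt).
Notation ht := (ht src tgt).
Variable Q : pm.
Notation V := (carrier Q).
Implicit Types (S T A B x y m : vset V) (v w t r : V).

Definition Pset x k : vset {ffun E + E -> V} := fun u => forall h,
  if hs h == k then x (u h) /\ idem (ht h) (u h) = u h else u h = 0.
Definition beta (u : {ffun E + E -> V}) : V :=
  \sum_e (act (inl e) (u (inr e)) - act (inr e) (u (inl e))).
Definition alpha (w : V) : {ffun E + E -> V} := [ffun h => act h w].

Notation Bcar := (V * C^o)%type.
Lemma pairDE (p p' : Bcar) : p + p' = (p.1 + p'.1, p.2 + p'.2). Proof. by case: p; case: p'. Qed.
Lemma pairZE a (p : Bcar) : a *: p = (a *: p.1, a *: p.2). Proof. by case: p. Qed.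
Lemma pair0E : (0 : Bcar) = (0, 0). Proof. by []. Qed.
Lemma pairNE (p : Bcar) : - p = (- p.1, - p.2). Proof. by case: p. Qed.
Lemma pair_sum (J : finType) (F : J -> Bcar) :
  \sum_j F j = (\sum_j (F j).1, \sum_j (F j).2).
Proof.
apply: (big_rec3 (fun a b c => a = (b, c))) => // j y1 y2 y3 _ ->.
by rewrite pairDE.
Qed.

Section Bmod.
Variables (k : I) (z : {ffun E + E -> V}).
Hypothesis zP : forall h, z h = if hs h == k then idem (ht h) (z h) else 0.
Hypothesis zb : beta z = 0.

Definition Bidem (l : I) (p : Bcar) : Bcar := (idem l p.1, if l == k then p.2 else 0).
Definition Bact h (p : Bcar) : Bcar := (act h p.1 + p.2 *: z h, 0).

Lemma Bidem_lin l : linear (Bidem l).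
Proof.
move=> a [q c] [q' c']; rewrite /Bidem pairZE pairDE /= pairZE pairDE /=.
congr pair; first by rewrite idemD idemZ.
by case: eqP => _ //; rewrite scaler0 addr0.
Qed.
Lemma Bact_lin h : linear (Bact h).
Proof.
move=> a [q c] [q' c']; rewrite /Bact pairZE pairDE /= pairZE pairDE /=.
congr pair; last by rewrite scaler0 addr0.
rewrite actD actZ scalerDr scalerDl -scalerA.
by rewrite !addrA; congr (_ + _); rewrite addrAC.
Qed.
Lemma Bidem_orth l l' p : Bidem l (Bidem l' p) = if l == l' then Bidem l p else 0.
Proof.
case: p => q c; rewrite /Bidem /= idem_orth.
case: (eqVneq l l') => [<-|nl].
  by case: eqP.
rewrite pair0E; congr pair.
by case: eqP => // E1; case: eqP => // E0; rewrite E1 E0 eqxx in nl.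
Qed.
Lemma Bidem_sum p : \sum_(l : I) Bidem l p = p.
Proof.
case: p => q c; rewrite pair_sum /Bidem /=; congr pair; first exact: idem_sum.
by rewrite -big_mkcond big_pred1_eq.
Qed.
Lemma Bact_idem h p : Bact h p = Bidem (ht h) (Bact h (Bidem (hs h) p)).
Proof.
case: p => q c; rewrite /Bidem /Bact /=; congr pair; last by case: eqP.
rewrite idemD idemZ -act_idem.
have := zP h; case: eqP => _ Ez; first by rewrite -Ez.
by rewrite Ez idem0 !scaler0.
Qed.
Lemma Bpreproj p :
  \sum_(e : E) (Bact (inl e) (Bact (inr e) p) - Bact (inr e) (Bact (inl e) p)) = 0.
Proof.
case: p => q c; rewrite pair_sum pair0E; congr pair.
  rewrite (eq_bigr (fun e => (act (inl e) (act (inr e) q) - act (inr e) (act (inl e) q))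
      + c *: (act (inl e) (z (inr e)) - act (inr e) (z (inl e))))).
    have zb' : \sum_e (act (inl e) (z (inr e)) - act (inr e) (z (inl e))) = 0 := zb.
    by rewrite big_split /= preproj_rel -scaler_sumr zb' scaler0 addr0.
  move=> e _; rewrite /Bact pairNE pairDE /= !scale0r !addr0 !actD !actZ.
  by rewrite scalerBr opprD addrACA.
by rewrite big1 // => e _; rewrite pairNE pairDE /= subrr.
Qed.

Definition Bmod : pm := PMod Bidem_lin Bact_lin Bidem_orth Bidem_sum Bact_idem Bpreproj.
End Bmod.

Lemma alpha_onto lam x k z : is_q_lambda lam Q -> is_submod x -> fd_nilpotent x ->
  Pset x k z -> beta z = 0 -> exists w, Wsoc x k w /\ alpha w = z.
Proof.
move=> [lnQ [injQ _]] hx fx Pz zb.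
have zP : forall h, z h = if hs h == k then idem (ht h) (z h) else 0.
  by move=> h; have := Pz h; case: eqP => _ // [_ ->].
have xz : forall h, x (z h).
  by move=> h; have := Pz h; case: eqP => _; [case|move=> ->; apply: sub0].
set B := Bmod zP zb.
pose g : V -> carrier B := fun q => (q, 0).
have gm : is_morph g.
  split; [|split].
  - move=> a q q'; rewrite /g /= pairZE pairDE /=; congr pair.
    by rewrite scaler0 addr0.
  - move=> l q; rewrite /g /= /Bidem /=; by case: eqP.
  - move=> h q; rewrite /g /= /Bact /=; by rewrite scale0r addr0.
have ginj : injective g by move=> q q' [].
have idm : is_morph (id : V -> V) by split; [|split].
have e01 : forall h, act h ((0, 1) : carrier B) = g (z h).
  by move=> h; rewrite /= /Bact /g /= act0 scale1r add0r.
have I1 : idem k ((0, 1) : carrier B) = (0, 1) by rewrite /= /Bidem /= idem0 eqxx.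
have lnB : loc_nilpotent B.
  move=> [q c].
  have [S1 [hS1 [fS1 S1q]]] := lnQ q.
  have [hT fT] := @fd_nilp_sumimg I E src tgt C Q Q id S1 x idm hS1 fS1 hx fx.
  set T := sumset S1 (img id x) in hT fT.
  have [hU fU] := @fd_nilp_sumimg I E src tgt C B Q g _ T gm (zero_submod B) (fd_nilp_zero B) hT fT.
  set U := sumset _ (img g T) in hU fU.
  have A1 : forall h, U (act h ((0, 1) : carrier B)).
    move=> h; rewrite e01; exists 0, (g (z h)); split => //; split; last by rewrite add0r.
    exists (z h); split => //; exists 0, (z h); split; first exact: sub0.
    by split; [exists (z h)|rewrite add0r].
  exists (addC U (0, 1)); split; first exact: addC_submod hU I1 A1.
  split; first exact: fd_nilp_step hU fU I1 A1.
  exists c; exists 0, (g q); split => //; split; last first.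
    by rewrite add0r /g /= pairZE pairNE pairDE /= scaler0 oppr0 addr0 /GRing.scale /= mulr1 subrr.
  exists q; split => //; exists q, 0; split => //; split; last by rewrite addr0.
  by exists 0; split => //; apply: sub0.
have [w' [[w'l [w'I w'A]] Hw']] := injQ Q B g id lnQ lnB gm ginj idm.
exists (w' ((0, 1) : carrier B)); split; [split|].
- by rewrite -w'I I1.
- by move=> h; rewrite -w'A e01 Hw'.
- by apply/ffunP => h; rewrite ffunE -w'A e01 Hw'.
Qed.
End Crys4.


Section ProdDim.
Variables (F : fieldType) (V : lmodType F) (J : finType).
Variables (Y : J -> vset V) (n : J -> nat).
Hypothesis hY : forall j, subsp (Y j).
Hypothesis cY : forall j, @codim F V (@zero_set F V) (Y j) (n j).

Lemma prod_dim :
  @codim F {ffun J -> V} (@zero_set F _) (fun u => forall j, Y j (u j)) (\sum_j n j).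
Proof.
pose Ps (s : seq J) : vset {ffun J -> V} :=
  fun u => (forall j, Y j (u j)) /\ (forall j, j \notin s -> u j = 0).
have ind : forall s, uniq s -> @codim F _ (@zero_set F _) (Ps s) (\sum_(j <- s) n j).
  elim => [_|j s IH /= /andP [js us]].
    rewrite big_nil; exists [tuple]; split; first by case.
    split; first by move=> c _ [].
    move=> u [_ Hu]; exists (fun _ => 0).
    have -> : u = 0 by apply/ffunP => j; rewrite Hu // ffunE.
    by rewrite /zero_set /= big_ord0 subr0.
  rewrite big_cons addnC.
  have pl : linear (fun u : {ffun J -> V} => u j) by move=> a u v; rewrite !ffunE.
  apply: (codim_ranknull pl).
  - split; [|split].
    + by split => j'; rewrite ffunE //; case: (hY j').
    + move=> u v [Hu1 Hu2] [Hv1 Hv2]; split => j'; rewrite ffunE.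
        by case: (hY j') => _ [HD _]; apply: HD.
      by move=> nj; rewrite Hu2 // Hv2 // addr0.
    + move=> a v [Hv1 Hv2]; split => j'; rewrite ffunE.
        by case: (hY j') => _ [_ HZ]; apply: HZ.
      by move=> nj; rewrite Hv2 // scaler0.
  - apply: codim_eq (IH us) => //.
    move=> u; split.
      move=> [HY Hout]; split; first split => // j' nj.
        by move: nj; rewrite in_cons negb_or => /andP [_ /Hout].
      exact: Hout js.
    move=> [[HY Hout] uj]; split => // j'; case: (eqVneq j' j) => [-> //|nj' njs].
    by apply: Hout; rewrite in_cons negb_or nj'.
  - apply: codim_eq (cY j) => //.
    move=> v; split; last by move=> [w [[HY _] <-]].
    move=> Yv; exists [ffun j' => if j' == j then v else 0]; split; last by rewrite ffunE eqxx.
    split => j'; rewrite ffunE; case: eqP => [->|nj'] //; first by case: (hY j').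
    by rewrite in_cons => /norP [/eqP].
have := ind _ (index_enum_uniq J).
apply: codim_eq => // u; split; first by case.
by move=> H; split => // j; rewrite mem_index_enum.
Qed.
End ProdDim.

Section Crys6.
Variables (I E : finType) (src tgt : E -> I) (C : fieldType).
Notation pm := (pmod src tgt C).
Notation hs := (hs src tgt).
Notation ht := (ht src tgt).
Variable Q : pm.
Notation V := (carrier Q).
Notation Z0 := (@zero_set C V).
Implicit Types (S T A B x y m : vset V) (v w t r : V).

Lemma subsp_eq (W : lmodType C) (S S' : vset W) : set_eq S S' -> subsp S -> subsp S'.
Proof.
move=> eS [H0 [HD HZ]]; split; [exact/eS|split].
- by move=> u v /eS Su /eS Sv; apply/eS; apply: HD.
- by move=> a v /eS Sv; apply/eS; apply: HZ.
Qed.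

Lemma qdim_spec (W : lmodType C) (S T : vset W) n :
  @codim C W S T n -> @codim C W S T (@qdim C W S T).
Proof. by move=> H; apply: (epsilon_spec (inhabits 0%N) _ (ex_intro _ n H)). Qed.

Lemma beta_lin : linear (@beta I E src tgt C Q).
Proof.
move=> a u v; rewrite /beta scaler_sumr -big_split; apply: eq_bigr => e _ /=.
rewrite !ffunE !actD !actZ scalerBr opprD !addrA; congr (_ + _).
by rewrite addrAC.
Qed.

Lemma alpha_lin : linear (@alpha I E src tgt C Q).
Proof. by move=> a u v; apply/ffunP => h; rewrite !ffunE actD actZ. Qed.

Lemma Pset_subsp x k : is_submod x -> subsp (@Pset I E src tgt C Q x k).
Proof.
move=> hx; split; [|split].
- move=> h; rewrite ffunE; case: eqP => _; last by [].
  by rewrite idem0; split => //; apply: sub0.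
- move=> u v Hu Hv h; rewrite ffunE; have := Hu h; have := Hv h.
  case: eqP => _; last by move=> -> ->; rewrite addr0.
  by move=> [xv Iv] [xu Iu]; split; [apply: subD|rewrite idemD Iu Iv].
- move=> a v Hv h; rewrite ffunE; have := Hv h.
  case: eqP => _; last by move=> ->; rewrite scaler0.
  by move=> [xv Iv]; split; [apply: subZ|rewrite idemZ Iv].
Qed.

Lemma Wsoc_subsp x k : is_submod x -> subsp (Wsoc x k).
Proof.
move=> hx; split; [|split].
- by split; [rewrite idem0|move=> h; rewrite act0; apply: sub0].
- move=> u v [Iu Au] [Iv Av]; split; first by rewrite idemD Iu Iv.
  by move=> h; rewrite actD; apply: subD.
- move=> a v [Iv Av]; split; first by rewrite idemZ Iv.
  by move=> h; rewrite actZ; apply: subZ.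
Qed.

Lemma Pset_x x k u h : is_submod x -> Pset x k u -> x (u h).
Proof. by move=> hx /(_ h); case: eqP => _; [case|move=> ->; apply: sub0]. Qed.

Lemma beta_img x k : is_submod x ->
  set_eq (fun v => exists u, Pset x k u /\ beta u = v) (at_vertex k (Jset x)).
Proof.
move=> hx v; split.
  move=> [u [Pu <-]]; split.
    exists [ffun h => match h with inl e => u (inr e) | inr e => - u (inl e) end].
    split.
      case=> e; rewrite ffunE; [|apply: (subN hx)]. exact: (@Pset_x x k u (inr e) hx Pu). exact: (@Pset_x x k u (inl e) hx Pu).
    rewrite big_sumType /beta sumrB; congr (_ + _); first by apply: eq_bigr => e _; rewrite ffunE.
    by rewrite -sumrN; apply: eq_bigr => e _; rewrite ffunE actN.
  rewrite /beta idem_sum'; apply: eq_bigr => e _; rewrite idemB !idem_act /=.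
  have P1 := Pu (inl e); have P2 := Pu (inr e); simpl in P1, P2.
  case: ifP => [_|/negbT nt]; case: ifP => [_|/negbT ns] //.
  - by move: P1; rewrite eq_sym (negbTE ns) => ->; rewrite act0 subr0.
  - by move: P2; rewrite eq_sym (negbTE nt) => ->; rewrite act0 sub0r.
  - move: P1 P2; rewrite eq_sym (negbTE ns) eq_sym (negbTE nt) => -> ->.
    by rewrite !act0 subrr.
move=> [[f [Hf Ef]] Iv].
pose u : {ffun E + E -> V} := [ffun h => match h with
   | inl e => if src e == k then - idem (tgt e) (f (inr e)) else 0
   | inr e => if tgt e == k then idem (src e) (f (inl e)) else 0 end].
exists u; split.
  case=> e; rewrite /u ffunE /=; case: eqP => _ //.
    by split; [apply: (subN hx); apply: (subI _ hx)|rewrite idemN idem_idem].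
  by split; [apply: (subI _ hx)|rewrite idem_idem].
rewrite -Iv Ef idem_sum' big_sumType /= -big_split /beta; apply: eq_bigr => e _ /=.
rewrite !idem_act /u !ffunE /= !(eq_sym k).
have h1 := act_hs (inl e) (f (inl e)); have h2 := act_hs (inr e) (f (inr e)).
simpl in h1, h2.
case: ifP => _; case: ifP => _;
  rewrite ?act0 ?actN ?opprK ?subr0 ?sub0r ?oppr0 ?addr0 ?add0r ?h1 ?h2 //.
Qed.
End Crys6.

Section Crys7.
Variables (I E : finType) (src tgt : E -> I) (C : fieldType).
Notation pm := (pmod src tgt C).
Notation hs := (hs src tgt).
Notation ht := (ht src tgt).
Variable Q : pm.
Notation V := (carrier Q).
Notation Z0 := (@zero_set C V).
Notation Z0' := (@zero_set C {ffun E + E -> V}).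
Implicit Types (S T A B x y : vset V) (v w t r : V).

Definition dd x l := @qdim C V Z0 (at_vertex l x).

Lemma codim_zero0 (W : lmodType C) : @codim C W (@zero_set C W) (@zero_set C W) 0.
Proof.
exists [tuple]; split; first by case.
split; first by move=> c _ [].
by move=> t ->; exists (fun _ => 0); rewrite /zero_set big_ord0 subr0.
Qed.

Lemma at_dim x l : is_submod x -> fd_nilpotent x -> @codim C V Z0 (at_vertex l x) (dd x l).
Proof.
move=> hx [[n [bs [_ [_ Hb3]]]] _].
have [m Hm] : exists m, @codim C V Z0 (at_vertex l x) m.
  apply: (@codim_exists C V Z0 _ n (map_tuple (idem l) bs)); first exact: zsub.
  move=> t [xt It]; have [c Hc] := Hb3 t xt; exists c.
  move: Hc; rewrite /zero_set => /eqP; rewrite subr_eq0 => /eqP Et.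
  change (t = lc bs c) in Et.
  by rewrite -(lin_lc (idem_lin l)) -Et It subrr.
exact: qdim_spec Hm.
Qed.

Lemma formula lam x k : is_q_lambda lam Q -> is_submod x -> fd_nilpotent x ->
  ((phi k x)%:Z - (eps k x)%:Z =
   (lam k)%:Z + (\sum_h (if hs h == k then dd x (ht h) else 0))%:Z - 2%:Z * (dd x k)%:Z)%R.
Proof.
move=> hQ hx fx.
have lnQ := proj1 hQ.
set p := \sum_h _.
have cP : @codim C _ Z0' (Pset x k) p.
  pose Y := fun h => if hs h == k then at_vertex (ht h) x else Z0.
  pose nY := fun h => if hs h == k then dd x (ht h) else 0%N.
  have hY : forall h, subsp (Y h).
    by move=> h; rewrite /Y; case: (hs h == k); [exact: subsp_at|exact: zsub].
  have cY : forall h, @codim C V Z0 (Y h) (nY h).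
    by move=> h; rewrite /Y /nY; case: (hs h == k); [exact: at_dim|exact: codim_zero0].
  apply: codim_eq (prod_dim hY cY) => // u; split => H h; have := H h;
    rewrite /Y; by case: (hs h == k).
have [pbs [_ [_ Hp3]]] := cP.
set Zs := fun u => Pset x k u /\ beta u = 0.
have [z cZ] : exists z, @codim C _ Z0' Zs z.
  apply: (@codim_exists C _ Z0' _ _ pbs); first exact: zsub.
  by move=> t [Pt _]; apply: Hp3.
set BP := fun v => exists u, Pset x k u /\ beta u = v.
have [b cB] : exists b, @codim C V Z0 BP b.
  apply: (@codim_exists C V Z0 BP _ (map_tuple (@beta I E src tgt C Q) pbs)); first exact: zsub.
  move=> v [u [Pu <-]]; have [c Hc] := Hp3 u Pu; exists c.
  move: Hc; rewrite /zero_set => /eqP; rewrite subr_eq0 => /eqP Et.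
  change (u = lc pbs c) in Et.
  by rewrite -(lin_lc (@beta_lin I E src tgt C Q)) -Et subrr.
have cP2 := codim_ranknull (@beta_lin I E src tgt C Q) (Pset_subsp k hx) cZ cB.
have pE : p = (z + b)%N := codim_uniq (zsub _) cP cP2.
set Ws := Wsoc x k.
have cK := K_dim k hQ.
have cK' : @codim C V Z0 (fun w => Ws w /\ alpha w = 0) (lam k).
  apply: codim_eq cK => // w; split.
    move=> [Iw Aw]; split; first by split => // h; rewrite Aw; apply: sub0.
    by apply/ffunP => h; rewrite !ffunE Aw.
  move=> [[Iw _] Aw]; split => // h.
  by have := congr1 (fun u : {ffun E + E -> V} => u h) Aw; rewrite !ffunE.
have cZ' : @codim C _ Z0' (fun u => exists w, Ws w /\ alpha w = u) z.
  apply: codim_eq cZ => // u; split.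
    move=> [Pu Bu]; exact: alpha_onto hQ hx fx Pu Bu.
  move=> [w [[Iw Aw] <-]]; split.
    move=> h; rewrite ffunE; case: eqP => Eh.
      by split; [apply: Aw|rewrite idem_act eqxx].
    by rewrite -Iw act_other //; apply/eqP => E1; apply: Eh; rewrite E1.
  by rewrite /beta; under eq_bigr do rewrite !ffunE; apply: preproj_rel.
have cW := codim_ranknull (@alpha_lin I E src tgt C Q) (Wsoc_subsp k hx) cK' cZ'.
set Xk := at_vertex k x.
have cX : @codim C V Z0 Xk (dd x k) := at_dim k hx fx.
have [xs [_ [_ Hx3]]] := cX.
have eBP : set_eq BP (at_vertex k (Jset x)) := beta_img k hx.
have sBP : subsp BP.
  apply: subsp_eq (subsp_at k (Jset_submod hx)) => t; split => /eBP //.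
have BPX : set_sub BP Xk.
  move=> t /eBP [Jt It]; split => //; exact: Jset_sub Jt.
have [e cE] : exists e, @codim C V BP Xk e.
  apply: (@codim_exists C V BP _ _ xs) => // t Xt; have [c Hc] := Hx3 t Xt; exists c.
  by rewrite Hc; case: sBP.
have cX2 := codim_trans (zsub _) sBP (fun t (H : Z0 t) => ltac:(rewrite H; case: sBP => //)) BPX cB cE.
have xE : dd x k = (b + e)%N := codim_uniq (zsub _) cX cX2.
have epsE : eps k x = e.
  rewrite /eps; apply: qdimE.
    apply: subsp_eq sBP => t; rewrite (rad_at k hx fx t); split => /eBP //.
  apply: codim_eq cE => // t; rewrite (rad_at k hx fx t); split => /eBP //.
have XW : set_sub Xk Ws.
  move=> t [xt It]; split => // h; exact: subA.
have [ws [_ [_ Hw3]]] := cW.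
have [f cF] : exists f, @codim C V Xk Ws f.
  apply: (@codim_exists C V Xk _ _ ws); first exact: subsp_at.
  move=> t Wt; have [c Hc] := Hw3 t Wt; exists c.
  by rewrite Hc; case: (subsp_at k hx).
have cW2 := codim_trans (zsub _) (subsp_at k hx) (fun t (H : Z0 t) => ltac:(rewrite H; case: (subsp_at k hx) => //)) XW cX cF.
have wE : (lam k + z)%N = (dd x k + f)%N := codim_uniq (zsub _) cW cW2.
have phiE : phi k x = f.
  rewrite /phi; apply: qdimE; first exact: subsp_at.
  apply: codim_eq cF => // t; rewrite (soc_at k lnQ hx t) //.
rewrite phiE epsE pE.
move: wE xE; lia.
Qed.
End Crys7.

Lemma cartan_sum (I E : finType) (src tgt : E -> I) (noloop : forall e, src e != tgt e) i j :
  cartan src tgt i j =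
  ((2 * (i == j))%N)%:Z - (\sum_h (if hs src tgt h == i then (ht src tgt h == j : nat) else 0%N))%:Z.
Proof.
rewrite /cartan big_sumType /=.
case: (eqVneq i j) => [<-|nij].
  rewrite !big1 ?addn0 ?subr0 //.
  - move=> e _; case: (eqVneq (src e) i) => // Ei; case: (eqVneq (tgt e) i) => // Et.
    by have := noloop e; rewrite Ei Et eqxx.
  - move=> e _; case: (eqVneq (tgt e) i) => // Ei; case: (eqVneq (src e) i) => // Et.
    by have := noloop e; rewrite Ei Et eqxx.
rewrite muln0 sub0r; congr (- _); congr Posz.
rewrite -big_split /= -sum1_card big_mkcond /=; apply: eq_bigr => e _.
rewrite inE.
case: (eqVneq (src e) i) => [Es|ns]; case: (eqVneq (tgt e) j) => [Et|nt];
  case: (eqVneq (src e) j) => [Es'|ns']; case: (eqVneq (tgt e) i) => [Et'|nt'] //=.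
all: try (by exfalso; move: nij; rewrite -Es Es' eqxx).
all: try (by exfalso; move: nij; rewrite -Et' Et eqxx).
Qed.

Unset Implicit Arguments.

Theorem mainTheorem5 (R : realType) (I E : finType) (src tgt : E -> I)
    (noloop : forall e : E, src e != tgt e)
    (lam : I -> nat)
    (Q : pmod src tgt R[i]) (hQ : is_q_lambda lam Q)
    (x y : vset (carrier Q))
    (hx : is_submod x) (hxnil : fd_nilpotent x)
    (i j : I)
    (hy : is_submod y) (hxy : quot_is_simple_s x y j) :
  (phi i y)%:Z - (eps i y)%:Z = (phi i x)%:Z - (eps i x)%:Z - cartan src tgt i j.
Proof.
have [sxy [v [yv [nxv [Iv [Av Sp]]]]]] := hxy.
have eyv : set_eq (addC x v) y.
  move=> t; split; last exact: Sp.
  move=> [a Ha]; have := subD hy (sxy _ Ha) (subZ a hy yv); by rewrite subrK.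
have fy : fd_nilpotent y := fd_nilp_eq eyv (fd_nilp_step hx hxnil Iv Av).
have ddE : forall l, dd y l = (dd x l + (l == j))%N.
  move=> l; rewrite /dd; apply: qdimE; first exact: zsub.
  apply: (codim_trans (T := at_vertex l x)); first exact: zsub.
  - exact: subsp_at.
  - by move=> t ->; split; [apply: sub0|rewrite idem0].
  - by move=> t [xt It]; split => //; apply: sxy.
  - exact: at_dim.
  case: (eqVneq l j) => [->|nlj] /=.
    apply: codim_eq (codim_one (subsp_at j hx) (fun H : at_vertex j x v => nxv (proj1 H))) => // t.
    split.
      move=> [a [xt It]]; split.
        by apply/eyv; exists a.
      by move: It; rewrite idemB idemZ Iv => /addIr.
    move=> [yt It]; have [a Ha] := Sp t yt; exists a; split => //.
    by rewrite idemB idemZ Iv It.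
  exists [tuple]; split; first by case.
  split; first by move=> c _ [].
  move=> t [yt It]; exists (fun _ => 0); rewrite big_ord0 subr0; split => //.
  have [a Ha] := Sp t yt; have := subI l hx Ha.
  have lv : idem l v = 0 by rewrite -Iv idem_ne.
  by rewrite idemB idemZ It lv scaler0 subr0.
have Fx := formula i hQ hx hxnil.
have Fy := formula i hQ hy fy.
have Sy : (\sum_h (if hs src tgt h == i then dd y (ht src tgt h) else 0) =
    \sum_h (if hs src tgt h == i then dd x (ht src tgt h) else 0) +
    \sum_h (if hs src tgt h == i then (ht src tgt h == j : nat) else 0))%N.
  by rewrite -big_split; apply: eq_bigr => h _ /=; case: ifP => _; rewrite ?ddE.
rewrite Fy Fx (cartan_sum noloop) Sy ddE.
lia.
Qed.
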